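(* Let $(x_n)$ be generated by (HPPA). Let $\gamma>0$ be real and let ${\rm a},{\rm B},{\rm E}:\mathbb{N}\to\mathbb{N}$ be monotone functions satisfying (Q1), (Q3), (Q4) respectively. Let $\mathcal{E},\mathcal{D},\ell\in\mathbb{N}$ satisfy $\mathcal{E}\geq 1+\sum_{i=0}^{{\rm E}(0)}\|e_i\|$, $\mathcal{D}\geq\|x_0-p\|$ for some $p\in S$, and $\ell\geq\gamma$. Define $\xi(k):=\max\{{\rm a}(2(2\mathcal{D}+\mathcal{E})(k+1)-1),\ {\rm E}(2k+1)+1\}$ and $$\chi_\ell(k):=\max\{\xi(4k+3),\ {\rm B}(8(\mathcal{D}+\mathcal{E})(k+1)\ell-1)\}+1.$$ Then $\forall k\in\mathbb{N}\ \forall n\geq\chi_\ell(k)\ \big(\|x_n-J_\gamma(x_n)\|\leq\frac{1}{k+1}\big)$.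
   Context: $X$ is a real Hilbert space, $\mathsf{A}:X\to 2^X$ a maximal monotone operator with zero set $S=\{x:0\in\mathsf{A}(x)\}$, assumed nonempty. For $\beta>0$, $J_\beta:=(Id+\beta\mathsf{A})^{-1}$ is the resolvent, a single-valued nonexpansive map with fixed point set $S$. Given $(\alpha_n)\subset\,]0,1[$, $(\beta_n)\subset(0,\infty)$, $(e_n)\subset X$, $x_0\in X$, (HPPA) is the sequence $x_{n+1}:=\alpha_n x_0+(1-\alpha_n)(J_{\beta_n}(x_n)+e_n)$. (Q1): $\forall k\,\forall n\geq{\rm a}(k)\ \alpha_n\leq\frac{1}{k+1}$. (Q3): $\forall k\,\forall n\geq{\rm B}(k)\ \beta_n\geq k$. (Q4): $\forall k\,\forall n\ \sum_{i={\rm E}(k)+1}^{{\rm E}(k)+n}\|e_i\|\leq\frac{1}{k+1}$. Monotone means nondecreasing. *)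

(* Defs.v *)
From Stdlib Require Import Reals Lra.
Open Scope R_scope.

Record HilbertSpace := mkHilbert {
  hcar :> Type;
  hzero : hcar;
  hadd : hcar -> hcar -> hcar;
  hopp : hcar -> hcar;
  hscal : R -> hcar -> hcar;
  hinner : hcar -> hcar -> R;
  hadd_assoc : forall x y z, hadd x (hadd y z) = hadd (hadd x y) z;
  hadd_comm : forall x y, hadd x y = hadd y x;
  hadd_zero : forall x, hadd x hzero = x;
  hadd_opp : forall x, hadd x (hopp x) = hzero;
  hscal_assoc : forall a b x, hscal a (hscal b x) = hscal (a * b) x;
  hscal_one : forall x, hscal 1 x = x;
  hscal_addr : forall a x y, hscal a (hadd x y) = hadd (hscal a x) (hscal a y);
  hscal_addl : forall a b x, hscal (a + b) x = hadd (hscal a x) (hscal b x);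
  hinner_sym : forall x y, hinner x y = hinner y x;
  hinner_addl : forall x y z, hinner (hadd x y) z = hinner x z + hinner y z;
  hinner_scall : forall a x y, hinner (hscal a x) y = a * hinner x y;
  hinner_pos : forall x, 0 <= hinner x x;
  hinner_def : forall x, hinner x x = 0 -> x = hzero;
  hcomplete : forall u : nat -> hcar,
    (forall eps, 0 < eps -> exists N, forall m n, (N <= m)%nat -> (N <= n)%nat ->
        sqrt (hinner (hadd (u m) (hopp (u n))) (hadd (u m) (hopp (u n)))) < eps) ->
    exists l, forall eps, 0 < eps -> exists N, forall n, (N <= n)%nat ->
        sqrt (hinner (hadd (u n) (hopp l)) (hadd (u n) (hopp l))) < eps
}.

Arguments hzero {h}.
Arguments hadd {h}.
Arguments hopp {h}.
Arguments hscal {h}.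
Arguments hinner {h}.

Definition hsub {X : HilbertSpace} (x y : X) : X := hadd x (hopp y).
Definition hnorm {X : HilbertSpace} (x : X) : R := sqrt (hinner x x).

(* A set-valued operator A : X -> 2^X is represented by its graph: A x u means u ∈ A(x). *)
Definition monotone_op {X : HilbertSpace} (A : X -> X -> Prop) : Prop :=
  forall x y u v, A x u -> A y v -> 0 <= hinner (hsub x y) (hsub u v).

Definition maximal_monotone {X : HilbertSpace} (A : X -> X -> Prop) : Prop :=
  monotone_op A /\
  forall x u, (forall y v, A y v -> 0 <= hinner (hsub x y) (hsub u v)) -> A x u.

(* J is the resolvent family of A: J β x = (Id + βA)^{-1} x, i.e. x ∈ J β x + β A(J β x),
   equivalently (1/β)(x - J β x) ∈ A (J β x). *)
Definition is_resolvent {X : HilbertSpace} (A : X -> X -> Prop) (J : R -> X -> X) : Prop :=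
  forall beta x, 0 < beta -> A (J beta x) (hscal (/ beta) (hsub x (J beta x))).

Fixpoint sumR (f : nat -> R) (n : nat) : R :=
  match n with
  | O => 0
  | S m => sumR f m + f m
  end.

Definition monotone_nat (f : nat -> nat) : Prop := forall m n, (m <= n)%nat -> (f m <= f n)%nat.

(* Main.v *)
Require Import Defs.
From Stdlib Require Import Reals Lra Lia Psatz.
Open Scope R_scope.

Lemma i0l {X : HilbertSpace} (y : X) : hinner hzero y = 0.
Proof. pose proof (hinner_addl X hzero hzero y) as H. rewrite hadd_zero in H. lra. Qed.
Lemma i0r {X : HilbertSpace} (y : X) : hinner y hzero = 0.
Proof. rewrite hinner_sym. apply i0l. Qed.
Lemma iaddr {X : HilbertSpace} (x y z : X) : hinner z (hadd x y) = hinner z x + hinner z y.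
Proof. rewrite hinner_sym, hinner_addl, (hinner_sym _ x), (hinner_sym _ y). reflexivity. Qed.
Lemma ioppl {X : HilbertSpace} (x y : X) : hinner (hopp x) y = - hinner x y.
Proof. pose proof (hinner_addl X x (hopp x) y) as H. rewrite hadd_opp, i0l in H. lra. Qed.
Lemma ioppr {X : HilbertSpace} (x y : X) : hinner y (hopp x) = - hinner y x.
Proof. rewrite hinner_sym, ioppl, hinner_sym. reflexivity. Qed.
Lemma iscalr {X : HilbertSpace} a (x y : X) : hinner y (hscal a x) = a * hinner y x.
Proof. rewrite hinner_sym, hinner_scall, hinner_sym. reflexivity. Qed.

Ltac expand := unfold hsub; repeat (rewrite hinner_addl || rewrite iaddr || rewrite ioppl
  || rewrite ioppr || rewrite hinner_scall || rewrite iscalr || rewrite i0l || rewrite i0r).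

Lemma nsq {X : HilbertSpace} (x : X) : hnorm x * hnorm x = hinner x x.
Proof. unfold hnorm. apply sqrt_sqrt, hinner_pos. Qed.
Lemma nnn {X : HilbertSpace} (x : X) : 0 <= hnorm x.
Proof. apply sqrt_pos. Qed.
Lemma nle {X : HilbertSpace} (v : X) r : 0 <= r -> hinner v v <= r * r -> hnorm v <= r.
Proof. intros H1 H2. unfold hnorm. rewrite <- (sqrt_square r) by auto. apply sqrt_le_1_alt; auto. Qed.
Lemma neq {X : HilbertSpace} (s t : X) : hinner s s = hinner t t -> hnorm s = hnorm t.
Proof. unfold hnorm; intros ->; auto. Qed.

Lemma CS {X : HilbertSpace} (x y : X) : hinner x y <= hnorm x * hnorm y.
Proof.
  set (a := hinner x x). set (b := hinner x y). set (c := hinner y y).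
  assert (Hq : forall t, 0 <= a + 2*t*b + t*t*c).
  { intro t. pose proof (hinner_pos X (hadd x (hscal t y))) as H. revert H; expand; intro H.
    rewrite (hinner_sym _ y x) in H. unfold a, b, c. nra. }
  assert (Hc : 0 <= c) by apply hinner_pos.
  assert (Ha : 0 <= a) by apply hinner_pos.
  assert (Hb : b * b <= a * c).
  { destruct (Req_dec c 0) as [E|E].
    - assert (y = hzero) by (apply hinner_def; exact E). unfold b. subst y.
      rewrite i0r. rewrite E. lra.
    - specialize (Hq (- b / c)).
      assert (c * (a + 2 * (- b / c) * b + (- b / c) * (- b / c) * c) = a * c - b * b)
        by (field; auto). nra. }
  unfold hnorm. fold a c. rewrite <- sqrt_mult by auto.
  destruct (Rle_dec b 0). pose proof (sqrt_pos (a*c)); lra.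
  rewrite <- (sqrt_square b) by lra. apply sqrt_le_1_alt; auto.
Qed.

Lemma tri {X : HilbertSpace} (s v w : X) :
  hinner s s = hinner v v + hinner v w + hinner w v + hinner w w -> hnorm s <= hnorm v + hnorm w.
Proof.
  intro H. apply nle. pose proof (nnn v); pose proof (nnn w); lra.
  rewrite H, <- (nsq v), <- (nsq w). pose proof (CS v w); pose proof (CS w v). nra.
Qed.
Lemma tri_add {X : HilbertSpace} (v w : X) : hnorm (hadd v w) <= hnorm v + hnorm w.
Proof. apply tri. expand. ring. Qed.
Lemma tri_sub {X : HilbertSpace} (a b c : X) : hnorm (hsub a c) <= hnorm (hsub a b) + hnorm (hsub b c).
Proof. apply tri. expand. ring. Qed.
Lemma nscal {X : HilbertSpace} a (v : X) r : hnorm v <= r -> hnorm (hscal a v) <= Rabs a * r.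
Proof.
  intro H. pose proof (nnn v). pose proof (Rabs_pos a). apply nle. nra.
  rewrite iscalr, hinner_scall, <- nsq.
  replace (a * (a * (hnorm v * hnorm v))) with ((Rabs a * hnorm v) * (Rabs a * hnorm v)).
  apply Rmult_le_compat; nra.
  pose proof (Rsqr_abs a) as E. unfold Rsqr in E. nra.
Qed.

Lemma fin_le N M : 0 <= N -> 0 <= M -> N * N <= N * M -> N <= M.
Proof. intros. nra. Qed.

Lemma res_p {X : HilbertSpace} (A : X -> X -> Prop) J p b x :
  monotone_op A -> is_resolvent A J -> A p hzero -> 0 < b ->
  hnorm (hsub (J b x) p) <= hnorm (hsub x p).
Proof.
  intros hm hJ Hp Hb. set (y := J b x).
  pose proof (hm _ _ _ _ (hJ b x Hb) Hp) as H. fold y in H.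
  assert (E : hinner (hsub y p) (hsub (hscal (/b) (hsub x y)) hzero) =
     /b * (hinner (hsub y p) (hsub x p) - hinner (hsub y p) (hsub y p))) by (expand; ring).
  rewrite E in H. pose proof (Rinv_0_lt_compat b Hb).
  assert (hinner (hsub y p) (hsub y p) <= hinner (hsub y p) (hsub x p)) by nra.
  apply fin_le; try apply nnn. rewrite nsq. pose proof (CS (hsub y p) (hsub x p)). lra.
Qed.

Lemma res_ne {X : HilbertSpace} (A : X -> X -> Prop) J g a b :
  monotone_op A -> is_resolvent A J -> 0 < g ->
  hnorm (hsub (J g a) (J g b)) <= hnorm (hsub a b).
Proof.
  intros hm hJ Hg. set (a' := J g a). set (b' := J g b).
  pose proof (hm _ _ _ _ (hJ g a Hg) (hJ g b Hg)) as H. fold a' b' in H.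
  assert (E : hinner (hsub a' b') (hsub (hscal (/g) (hsub a a')) (hscal (/g) (hsub b b'))) =
     /g * (hinner (hsub a' b') (hsub a b) - hinner (hsub a' b') (hsub a' b'))) by (expand; ring).
  rewrite E in H. pose proof (Rinv_0_lt_compat g Hg).
  assert (hinner (hsub a' b') (hsub a' b') <= hinner (hsub a' b') (hsub a b)) by nra.
  apply fin_le; try apply nnn. rewrite nsq. pose proof (CS (hsub a' b') (hsub a b)). lra.
Qed.

Lemma res_d {X : HilbertSpace} (A : X -> X -> Prop) J g b x :
  monotone_op A -> is_resolvent A J -> 0 < g -> 0 < b ->
  hnorm (hsub (J b x) (J g (J b x))) <= g / b * hnorm (hsub x (J b x)).
Proof.
  intros hm hJ Hg Hb. set (y := J b x). set (z := J g y).
  pose proof (hm _ _ _ _ (hJ b x Hb) (hJ g y Hg)) as H. fold y z in H.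
  assert (E : hinner (hsub y z) (hsub (hscal (/b) (hsub x y)) (hscal (/g) (hsub y z))) =
     /b * hinner (hsub y z) (hsub x y) - /g * hinner (hsub y z) (hsub y z)) by (expand; ring).
  rewrite E, <- nsq in H. pose proof (CS (hsub y z) (hsub x y)).
  set (N := hnorm (hsub y z)) in *. set (M := hnorm (hsub x y)) in *.
  assert (0 <= N) by apply nnn. assert (0 <= M) by apply nnn.
  assert (H4 : N * N <= N * (g / b * M)).
  { assert (H3 : g * (/ g * (N * N)) <= g * (/ b * (N * M))).
    { apply Rmult_le_compat_l. lra. pose proof (Rinv_0_lt_compat b Hb). nra. }
    replace (g * (/ g * (N * N))) with (N*N) in H3 by (field; lra).
    replace (N * (g / b * M)) with (g * (/ b * (N * M))) by (field; lra). lra. }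
  apply fin_le; auto. assert (0 < g/b) by (apply Rdiv_lt_0_compat; lra). nra.
Qed.

Lemma sumR_nonneg f n : (forall i, 0 <= f i) -> 0 <= sumR f n.
Proof. intro H. induction n; simpl. lra. specialize (H n). lra. Qed.
Lemma sumR_split f a b : sumR f (a + b) = sumR f a + sumR (fun j => f (a + j)%nat) b.
Proof. induction b. rewrite Nat.add_0_r. simpl. lra. rewrite Nat.add_succ_r. simpl. rewrite IHb. lra. Qed.

Ltac cst := repeat (rewrite mult_INR || rewrite plus_INR);
  try replace (INR 1) with 1 by (simpl; lra);
  try replace (INR 2) with 2 by (simpl; lra);
  try replace (INR 3) with 3 by (simpl; lra);
  try replace (INR 4) with 4 by (simpl; lra);
  try replace (INR 8) with 8 by (simpl; lra); ring.

Theorem mainTheorem9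
  (X : HilbertSpace) (A : X -> X -> Prop) (J : R -> X -> X)
  (hA : maximal_monotone A) (hJ : is_resolvent A J)
  (hS : exists p : X, A p hzero)
  (alpha beta : nat -> R) (e : nat -> X) (x0 : X) (x : nat -> X)
  (halpha : forall n, 0 < alpha n < 1) (hbeta : forall n, 0 < beta n)
  (hx0 : x O = x0)
  (hxS : forall n, x (S n) =
     hadd (hscal (alpha n) x0) (hscal (1 - alpha n) (hadd (J (beta n) (x n)) (e n))))
  (gamma : R) (hgamma : 0 < gamma)
  (a B Ef : nat -> nat)
  (ha_mon : monotone_nat a) (hB_mon : monotone_nat B) (hE_mon : monotone_nat Ef)
  (hQ1 : forall k n, (a k <= n)%nat -> alpha n <= 1 / (INR k + 1))
  (hQ3 : forall k n, (B k <= n)%nat -> INR k <= beta n)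
  (hQ4 : forall k n, sumR (fun j => hnorm (e (Ef k + 1 + j)%nat)) n <= 1 / (INR k + 1))
  (Ecal Dcal l : nat)
  (hEcal : INR Ecal >= 1 + sumR (fun i => hnorm (e i)) (Ef O + 1))
  (hDcal : exists p : X, A p hzero /\ INR Dcal >= hnorm (hsub x0 p))
  (hl : INR l >= gamma) :
  let xi := fun k : nat =>
    (Nat.max (a (2 * (2 * Dcal + Ecal) * (k + 1) - 1)) (Ef (2 * k + 1) + 1))%nat in
  let chi := fun k : nat =>
    (Nat.max (xi (4 * k + 3)) (B (8 * (Dcal + Ecal) * (k + 1) * l - 1)) + 1)%nat in
  forall k n : nat, (chi k <= n)%nat ->
    hnorm (hsub (x n) (J gamma (x n))) <= 1 / (INR k + 1).
Proof.
  intros xi chi k n Hn.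
  destruct hDcal as [p [Hp HD]]. destruct hA as [hm _].
  set (f := fun i => hnorm (e i)).
  assert (fnn : forall i, 0 <= f i) by (intro; apply nnn).
  assert (Hsum : forall n, sumR f n <= INR Ecal - 1 + 1).
  { intro m. assert (H0 := hQ4 O). simpl INR in H0.
    destruct (Nat.le_gt_cases m (Ef O + 1)) as [Hle|Hgt].
    - replace (Ef O + 1)%nat with (m + (Ef O + 1 - m))%nat in hEcal by lia.
      rewrite sumR_split in hEcal.
      pose proof (sumR_nonneg (fun j => f (m + j)%nat) (Ef O + 1 - m) (fun j => fnn _)).
      unfold f in *. specialize (H0 O). simpl in H0. lra.
    - replace m with (Ef O + 1 + (m - (Ef O + 1)))%nat by lia.
      rewrite sumR_split. specialize (H0 (m - (Ef O + 1))%nat).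
      unfold f in *. lra. }
  assert (Hbd : forall m, hnorm (hsub (x m) p) <= hnorm (hsub x0 p) + sumR f m).
  { induction m.
    - rewrite hx0. simpl. lra.
    - set (y := J (beta m) (x m)).
      assert (Ey : hnorm (hsub (x (S m)) p) =
        hnorm (hadd (hscal (alpha m) (hsub x0 p)) (hscal (1 - alpha m) (hadd (hsub y p) (e m))))).
      { apply neq. rewrite hxS. fold y. expand. ring. }
      rewrite Ey. eapply Rle_trans. apply tri_add.
      pose proof (res_p A J p (beta m) (x m) hm hJ Hp (hbeta m)) as Hy. fold y in Hy.
      pose proof (halpha m).
      assert (H1 := nscal (alpha m) (hsub x0 p) _ (Rle_refl _)).
      assert (H2 := nscal (1 - alpha m) (hadd (hsub y p) (e m)) _ (tri_add _ _)).
      rewrite Rabs_pos_eq in H1 by lra. rewrite Rabs_pos_eq in H2 by lra.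
      simpl. fold (f m) in H2. pose proof (nnn (hsub x0 p)).
      pose proof (sumR_nonneg f m fnn). pose proof (fnn m). nra. }
  destruct n as [|m]. { unfold chi in Hn. lia. }
  assert (Hm1 : (a (2 * (2 * Dcal + Ecal) * (4 * k + 3 + 1) - 1) <= m)%nat) by (unfold chi, xi in Hn; lia).
  assert (Hm2 : (Ef (2 * (4 * k + 3) + 1) + 1 <= m)%nat) by (unfold chi, xi in Hn; lia).
  assert (Hm3 : (B (8 * (Dcal + Ecal) * (k + 1) * l - 1) <= m)%nat) by (unfold chi, xi in Hn; lia).
  destruct Ecal as [|Ec].
  { pose proof (sumR_nonneg f (Ef O + 1) fnn). unfold f in *. simpl INR in hEcal. lra. }
  destruct l as [|l']. { simpl INR in hl. lra. }
  set (Ecal := S Ec) in *. set (l := S l') in *.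
  pose proof (hQ1 _ _ Hm1) as Ha. pose proof (hQ3 _ _ Hm3) as Hb.
  set (K2 := (2 * (4 * k + 3) + 1)%nat) in *.
  assert (He : f m <= 1 / (INR K2 + 1)).
  { pose proof (hQ4 K2 (S (m - (Ef K2 + 1)))) as H. simpl in H.
    pose proof (sumR_nonneg (fun j : nat => hnorm (e (Ef K2 + 1 + j)%nat)) (m - (Ef K2 + 1)) (fun _ => nnn _)).
    replace (Ef K2 + 1 + (m - (Ef K2 + 1)))%nat with m in H by lia. unfold f. lra. }
  assert (E1 : INR (2 * (2 * Dcal + Ecal) * (4 * k + 3 + 1) - 1) + 1 =
     2 * (2 * INR Dcal + INR Ecal) * (4 * INR k + 4)).
  { rewrite <- S_INR. replace (S _) with (2 * (2 * Dcal + Ecal) * (4 * k + 3 + 1))%nat by (unfold Ecal; lia).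
    rewrite !mult_INR, !plus_INR. cst. }
  assert (E2 : INR (8 * (Dcal + Ecal) * (k + 1) * l - 1) + 1 =
     8 * (INR Dcal + INR Ecal) * (INR k + 1) * INR l).
  { rewrite <- S_INR. replace (S _) with (8 * (Dcal + Ecal) * (k + 1) * l)%nat by (unfold Ecal, l; lia).
    cst. }
  assert (E3 : INR K2 + 1 = 8 * INR k + 8).
  { unfold K2. cst. }
  rewrite E1 in Ha. rewrite E3 in He.
  assert (Hb' : 8 * (INR Dcal + INR Ecal) * (INR k + 1) * INR l - 1 <= beta m) by lra.
  clear Hb E1 E2 E3.
  set (y := J (beta m) (x m)).
  pose proof (res_p A J p (beta m) (x m) hm hJ Hp (hbeta m)) as Hy. fold y in Hy.
  pose proof (Hbd m) as Hxm. pose proof (Hsum m) as Hsm.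
  assert (Hyp : hnorm (hsub p y) = hnorm (hsub y p)) by (apply neq; expand; ring).
  assert (Hxy : hnorm (hsub (x m) y) <= 2 * (INR Dcal + INR Ecal)).
  { eapply Rle_trans. apply (tri_sub _ p _). lra. }
  assert (Hx0y : hnorm (hsub x0 y) <= 2 * INR Dcal + INR Ecal).
  { eapply Rle_trans. apply (tri_sub _ p _). lra. }
  pose proof (halpha m) as Hal.
  assert (Hstep : hnorm (hsub (x (S m)) y) <= alpha m * hnorm (hsub x0 y) + f m).
  { assert (Ey : hnorm (hsub (x (S m)) y) =
        hnorm (hadd (hscal (alpha m) (hsub x0 y)) (hscal (1 - alpha m) (e m)))).
    { apply neq. rewrite hxS. fold y. expand. ring. }
    rewrite Ey. eapply Rle_trans. apply tri_add.
    assert (H1 := nscal (alpha m) (hsub x0 y) _ (Rle_refl _)).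
    assert (H2 := nscal (1 - alpha m) (e m) _ (Rle_refl _)).
    rewrite Rabs_pos_eq in H1 by lra. rewrite Rabs_pos_eq in H2 by lra.
    pose proof (fnn m). unfold f in *. nra. }
  pose proof (res_d A J gamma (beta m) (x m) hm hJ hgamma (hbeta m)) as Hd. fold y in Hd.
  pose proof (res_ne A J gamma y (x (S m)) hm hJ hgamma) as Hne.
  assert (Hyx : hnorm (hsub y (x (S m))) = hnorm (hsub (x (S m)) y)) by (apply neq; expand; ring).
  rewrite Hyx in Hne.
  assert (T : hnorm (hsub (x (S m)) (J gamma (x (S m)))) <=
     2 * hnorm (hsub (x (S m)) y) + gamma / beta m * hnorm (hsub (x m) y)).
  { eapply Rle_trans. apply (tri_sub _ y _).
    eapply Rle_trans. apply Rplus_le_compat_l. apply (tri_sub _ (J gamma y) _). lra. }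
  clearbody y. clear Hyx Hne Hd Hyp.
  set (D := INR Dcal) in *. set (E := INR Ecal) in *. set (Kr := INR k) in *. set (L := INR l) in *.
  assert (HE1 : 1 <= E) by (unfold E, Ecal; rewrite S_INR; pose proof (pos_INR Ec); lra).
  assert (HL1 : 1 <= L) by (unfold L, l; rewrite S_INR; pose proof (pos_INR l'); lra).
  assert (HD0 : 0 <= D) by apply pos_INR.
  assert (HK0 : 0 <= Kr) by apply pos_INR.
  set (N := hnorm (hsub (x m) y)) in *. set (M := hnorm (hsub x0 y)) in *.
  set (S := hnorm (hsub (x (S m)) y)) in *.
  set (be := beta m) in *. set (al := alpha m) in *.
  pose proof (hbeta m) as Hbe. fold be in Hbe.
  assert (HM0 : 0 <= M) by apply nnn. assert (HN0 : 0 <= N) by apply nnn.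
  assert (A1 : al * M <= 1 / (8 * Kr + 8)).
  { apply Rle_trans with (1 / (2 * (2 * D + E) * (4 * Kr + 4)) * (2 * D + E)).
    apply Rmult_le_compat; lra. right. field. lra. }
  assert (A2 : gamma / be * N <= 1 / (2 * Kr + 2)).
  { apply Rle_trans with (L / be * (2 * (D + E))).
    apply Rmult_le_compat; try lra. unfold Rdiv. apply Rmult_le_pos; try lra.
    left; apply Rinv_0_lt_compat; lra.
    unfold Rdiv. apply Rmult_le_compat_r. left; apply Rinv_0_lt_compat; lra. lra.
    assert (1 <= (D + E) * (Kr + 1) * L). { rewrite <- (Rmult_1_l 1) at 1. apply Rmult_le_compat; try lra. rewrite <- (Rmult_1_l 1) at 1. apply Rmult_le_compat; lra. }
    apply Rmult_le_reg_r with (be * (2 * Kr + 2)). nra.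
    replace (L / be * (2 * (D + E)) * (be * (2 * Kr + 2))) with (4 * ((D + E) * (Kr + 1) * L)) by (field; lra).
    replace (1 / (2 * Kr + 2) * (be * (2 * Kr + 2))) with be by (field; lra). lra. }
  apply Rle_trans with (2 * (1 / (8 * Kr + 8) + 1 / (8 * Kr + 8)) + 1 / (2 * Kr + 2)).
  lra. right. field. lra.
Qed.
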